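(* Let $p$ be an odd prime and let $\Phi_{p^2-1}(x)\in\mathbb{Z}[x]$ be the $(p^2-1)$-th cyclotomic polynomial. Let $$F(x)=\prod_{1\le s<t\le (p^2-1)/2}(x^{2t}-x^{2s}),\qquad T(x)=(-1)^{\frac{p^2+7}{8}}\left(\frac{p^2-1}{2}\right)^{\frac{p^2-1}{4}}x^{\frac{p^2-1}{4}}.$$ Then $\Phi_{p^2-1}(x)$ divides $F(x)-T(x)$ in $\mathbb{Z}[x]$. *)

(* Defs.v *)
From mathcomp Require Import all_boot all_algebra all_field.
Set Implicit Arguments. Unset Strict Implicit. Unset Printing Implicit Defensive.
Import GRing.Theory Num.Theory.
Local Open Scope ring_scope.

Definition lemF (p : nat) : {poly int} :=
  \prod_(1 <= t < ((p ^ 2 - 1) %/ 2).+1) \prod_(1 <= s < t)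
     ('X^(2 * t) - 'X^(2 * s)).

Definition lemT (p : nat) : {poly int} :=
  (((-1) ^+ ((p ^ 2 + 7) %/ 8) * ((((p ^ 2 - 1) %/ 2)%N)%:Z) ^+ ((p ^ 2 - 1) %/ 4))%:P)
    * 'X^((p ^ 2 - 1) %/ 4).

(* Main.v *)
Require Import Defs.
From mathcomp Require Import all_boot all_algebra all_field.
From mathcomp Require Import zify ring.
Import GRing.Theory Num.Theory.
Local Open Scope ring_scope.

Lemma sum_id n : (2 * \sum_(1 <= d < n) d = n * (n - 1))%N.
Proof.
elim: n => [|n IH]; first by rewrite big_geq.
case: n IH => [|n IH]; first by rewrite big_geq.
rewrite big_nat_recr //= mulnDr IH; nia.
Qed.

Lemma sum_ts m : (2 * \sum_(1 <= t < m.+1) \sum_(1 <= s < t) (t + s) = m.+1 * m * (m - 1))%N.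
Proof.
have inn t : (2 * \sum_(1 <= s < t) (t + s) = 3 * t * (t - 1))%N.
  rewrite big_split /= sum_nat_const_nat mulnDr sum_id; lia.
elim: m => [|m IH]; first by rewrite big_geq.
rewrite big_nat_recr //= mulnDr IH inn; nia.
Qed.

Section Alg.
Variables (F : fieldType) (m : nat) (z : F).
Hypothesis m_gt0 : (0 < m)%N.
Hypothesis hz : (m.*2).-primitive_root z.

Lemma z_neq0 : z != 0.
Proof. by rewrite (prim_root_eq0 hz) double_eq0 -lt0n. Qed.

Lemma zm : z ^+ m = -1.
Proof.
have h2 : (z ^+ m) ^+ 2 = 1 by rewrite -exprM muln2 prim_expr_order.
have : (z ^+ m - 1) * (z ^+ m + 1) = 0 by rewrite -subr_sqr expr1n h2 subrr.
move/eqP; rewrite mulf_eq0 => /orP[|]; last by rewrite addr_eq0 => /eqP.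
rewrite subr_eq0 => /eqP e.
have /dvdn_leq : (m.*2 %| m)%N by rewrite (prim_order_dvd hz) e.
move=> /(_ m_gt0); rewrite -addnn; lia.
Qed.

Lemma w_prim : m.-primitive_root (z ^+ 2).
Proof.
have := exp_prim_root hz 2.
by rewrite -muln2 gcdnMl mulnK.
Qed.

Lemma prod_one_sub : \prod_(1 <= d < m) (1 - (z ^+ 2) ^+ d) = m%:R.
Proof.
have := factor_Xn_sub_1 w_prim.
case: m m_gt0 => // m' _.
rewrite big_nat_recl // expr0 polyC1.

rewrite -{3}(expr1n {poly F} m'.+1).

rewrite subrXX.
have nz : ('X - 1 : {poly F}) != 0 by rewrite -polyC1 polyXsubC_eq0.
move/(mulfI nz) /(congr1 (horner^~ 1)).
rewrite horner_prod horner_sum => H.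
rewrite big_add1 /=.
transitivity (\prod_(0 <= i < m') ('X - ((z^+2)^+i.+1)%:P).[1]).
  by apply: eq_bigr => i _; rewrite hornerXsubC.
rewrite H.
have -> : \sum_(i < m'.+1) ('X ^+ (m' - i) * 1 ^+ i).[1] = \sum_(i < m'.+1) (1 : F).
  by apply: eq_bigr => i _; rewrite expr1n mulr1 hornerXn expr1n.
by rewrite sumr_const card_ord.
Qed.

Definition g d := z ^+ d - z ^- d.
Definition Q t := \prod_(1 <= d < t) g d.

Lemma zunit : z \is a GRing.unit.
Proof. by rewrite unitfE z_neq0. Qed.

Lemma g_sym d : (d <= m)%N -> g (m - d) = g d.
Proof.
move=> dm; rewrite /g.
have e : z ^+ (m - d) = - z ^- d by rewrite exprB // ?zunit // zm mulN1r.
by rewrite e invrN invrK opprK addrC.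
Qed.

Lemma QQ t : (t < m)%N -> Q t.+1 * Q (m - t) = Q m.
Proof.
elim: t => [_|t IH tm]; first by rewrite /Q big_geq // mul1r subn0.
have e : (m - t = (m - t.+1).+1)%N by lia.
have h1 : (1 <= m - t.+1)%N by lia.
rewrite -(IH (ltnW tm)) e /Q big_nat_recr //= (big_nat_recr _ _ _ h1) /=.
rewrite g_sym; last by lia.
by rewrite -!mulrA [g _ * _]mulrC.
Qed.

Lemma Bj h j : m = h.*2 -> (j <= h)%N ->
  \prod_(1 <= t < j.+1) Q t * \prod_(m.+1 - j <= t < m.+1) Q t = (Q m) ^+ j.
Proof.
move=> mh; elim: j => [_|j IH jh]; first by rewrite !big_geq ?subn0 // mulr1.
rewrite big_nat_recr //= (@big_ltn _ _ _ (m.+1 - j.+1)); last by lia.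
have -> : ((m.+1 - j.+1).+1 = m.+1 - j)%N by lia.
have -> : (m.+1 - j.+1 = m - j)%N by lia.
rewrite exprS -IH; last by lia.
rewrite -(@QQ j); last by lia.
ring.
Qed.

Lemma Bval h : m = h.*2 -> \prod_(1 <= t < m.+1) Q t = (Q m) ^+ h.
Proof.
move=> mh; rewrite -(@Bj h h mh (leqnn h)) (big_cat_nat _ (n := h.+1)); try lia.
by have -> : (m.+1 - h = h.+1)%N by lia.
Qed.


Lemma term_fact s t : (s < t)%N -> z ^+ (2 * t) - z ^+ (2 * s) = z ^+ (t + s) * g (t - s).
Proof.
move=> st; rewrite /g mulrBr -exprD -exprB ?zunit //; last by lia.
by congr (z ^+ _ - z ^+ _); lia.
Qed.

Lemma inner t : \prod_(1 <= s < t) (z ^+ (2 * t) - z ^+ (2 * s))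
   = z ^+ (\sum_(1 <= s < t) (t + s)) * Q t.
Proof.
have -> : Q t = \prod_(1 <= s < t) g (t - s).
  rewrite /Q big_nat_rev /=; apply: eq_big_nat => s /andP[s1 st].
  by congr g; lia.
rewrite -prodrXr -big_split /=.
by apply: eq_big_nat => s /andP[s1 st]; rewrite term_fact.
Qed.

Lemma Aval : \prod_(1 <= t < m.+1) \prod_(1 <= s < t) (z ^+ (2 * t) - z ^+ (2 * s))
  = z ^+ (\sum_(1 <= t < m.+1) \sum_(1 <= s < t) (t + s)) * \prod_(1 <= t < m.+1) Q t.
Proof.
rewrite -prodrXr -big_split /=; apply: eq_bigr => t _; exact: inner.
Qed.

Lemma gform d : g d = z ^- d * ((z ^+ 2) ^+ d - 1).
Proof.
rewrite /g mulrBr mulr1 -exprM mulnC muln2 -addnn exprD mulKf //.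
exact: expf_neq0 z_neq0.
Qed.

Lemma P2 : Q m ^+ 2 * (z ^+ (\sum_(1 <= d < m) d)) ^+ 2 = m%:R ^+ 2.
Proof.
rewrite -prod_one_sub -prodrXr /Q -!prodrXl -big_split /=.
apply: eq_bigr => d _; rewrite gform exprMn -mulrA -exprMn mulrC.
by rewrite exprMn -mulrA -exprMn mulfV ?expf_neq0 ?z_neq0 // expr1n mulr1 -sqrrN opprB.
Qed.


Lemma main_eval k : m = (4 * k)%N ->
  \prod_(1 <= t < m.+1) \prod_(1 <= s < t) (z ^+ (2 * t) - z ^+ (2 * s))
  = (-1) ^+ k.+1 * (m%:R) ^+ (2 * k) * z ^+ (2 * k).
Proof.
move=> mk.
have k1 : (0 < k)%N by lia.
rewrite Aval (@Bval (2 * k)); last by rewrite mk; lia.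
set a := (\sum_(1 <= d < m) d)%N.
set S := (\sum_(1 <= t < m.+1) \sum_(1 <= s < t) (t + s))%N.
have ha := sum_id m; have hS := sum_ts m; rewrite -/a -/S in ha hS.
have eS : S = (m * k.+1 + 2 * k + a * (2 * k) + m.*2 * (2 * k * k - 1))%N.
  rewrite mk in ha hS *; nia.
have y0 : z ^+ a != 0 by rewrite expf_neq0 // z_neq0.
have eQ : Q m ^+ 2 = m%:R ^+ 2 / (z ^+ a) ^+ 2.
  by rewrite -P2 mulfK // expf_neq0.
rewrite (exprM (Q m) 2 k) eQ eS exprD (exprM z m.*2) (prim_expr_order hz) expr1n mulr1.
rewrite exprD (exprM z a) exprD (exprM z m) zm expr_div_n -!exprM.
rewrite -mulnA; set Y := z ^+ (a * (2 * k)).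
have Y0 : Y != 0 by rewrite expf_neq0 // z_neq0.
by rewrite mulrA [_ * Y * _]mulrAC mulfK // mulrAC.
Qed.

End Alg.

Lemma p_form (p : nat) : prime p -> odd p ->
  exists k, (0 < k)%N /\ (p ^ 2 - 1 = 8 * k)%N.
Proof.
move=> pp op.
have p2 := prime_gt1 pp.
have ep := odd_double_half p; rewrite op /= in ep.
set j := p./2 in ep.
have ej : ~~ odd (j * j.+1) by rewrite oddM /=; case: (odd j).
have eK := odd_double_half (j * j.+1); rewrite (negbTE ej) /= in eK.
exists (j * j.+1)./2; split.
  suff : (0 < j)%N by nia.
  by lia.
rewrite -[p]ep; nia.
Qed.

Theorem lemma2p5 (p : nat) (hp : prime p) (hodd : odd p) :
  exists g : {poly int}, lemF p - lemT p = g * 'Phi_(p ^ 2 - 1).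
Proof.
have [k [k0 ek]] := @p_form p hp hodd.
have n0 : (0 < p ^ 2 - 1)%N by lia.
have [z hz] := C_prim_root_exists n0.
have hz' : ((4 * k).*2).-primitive_root z by have -> : ((4 * k).*2 = p ^ 2 - 1)%N by lia.
have e2 : ((p ^ 2 - 1) %/ 2 = 4 * k)%N by lia.
have e4 : ((p ^ 2 - 1) %/ 4 = 2 * k)%N by lia.
have e8 : ((p ^ 2 + 7) %/ 8 = k.+1)%N by lia.
have Hev : (map_poly intr (lemF p - lemT p) : {poly algC}).[z] = 0.
  rewrite rmorphB hornerD hornerN /lemF /lemT e2 e4 e8.
  rewrite !rmorph_prod horner_prod.
  have m0 : (0 < 4 * k)%N by lia.
  have hc : (((-1) ^+ k.+1 * ((4 * k)%N%:Z) ^+ (2 * k) : int)%:~R = ((-1) ^+ k.+1 * (4 * k)%:R ^+ (2 * k) : algC)).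
    by rewrite intrM intr_sign rmorphXn pmulrn.
  have hT : (map_poly intr (((-1) ^+ k.+1 * ((4 * k)%N%:Z) ^+ (2 * k))%:P * 'X^(2 * k)) : {poly algC}).[z]
     = (-1) ^+ k.+1 * (4 * k)%:R ^+ (2 * k) * z ^+ (2 * k).
    rewrite rmorphM /= map_polyC map_polyXn hornerCM hornerXn; congr (_ * _); exact: hc.
  rewrite hT.
  rewrite -(@main_eval algC (4 * k) z m0 hz' k erefl); apply/eqP; rewrite subr_eq0; apply/eqP.
  apply: eq_bigr => t _; rewrite rmorph_prod horner_prod; apply: eq_bigr => s _.
  by rewrite rmorphB !rmorphXn /= !map_polyX hornerD hornerN !hornerXn.
set P := lemF p - lemT p in Hev *.
set d := 'Phi_(p ^ 2 - 1).
have md : d \is monic := Cyclotomic_monic _.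
have d0 : d != 0 := monic_neq0 md.
exists (Pdiv.CommonRing.rdivp P d).
have eP := Pdiv.RingMonic.rdivp_eq md P.
suff r0 : Pdiv.CommonRing.rmodp P d = 0 by rewrite {1}eP r0 addr0.
set r := Pdiv.CommonRing.rmodp P d in eP *.
have dC : map_poly intr d = cyclotomic z (p ^ 2 - 1) := Cintr_Cyclotomic hz.
have dz : (cyclotomic z (p ^ 2 - 1)).[z] = 0.
  by apply/rootP; rewrite (root_cyclotomic hz).
have rz : root (map_poly intr r : {poly algC}) z.
  have dz' : (map_poly intr d : {poly algC}).[z] = 0 by rewrite dC.
  move: Hev; rewrite {1}eP rmorphD rmorphM hornerD hornerM dz' mulr0 add0r.
  by move/rootP.
have [pf [Dpf mpf] dvf] := minCpolyP z.
have mC := minCpoly_cyclotomic hz.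
set rQ := map_poly intr r : {poly rat}.
have rQC : map_poly ratr rQ = map_poly intr r :> {poly algC}.
  rewrite -map_poly_comp; apply: eq_map_poly => x /=; exact: rmorph_int.
have hdv : pf %| rQ by rewrite -dvf rQC.
apply/eqP; apply: contraT => rn0.
have rQ0 : rQ != 0.
  by rewrite -size_poly_eq0 size_map_inj_poly ?size_poly_eq0 //; exact: intr_inj.
move: hdv => /(dvdp_leq rQ0).
have -> : size pf = size d.
  rewrite -(size_map_poly (ratr : {rmorphism rat -> algC}) pf) -Dpf mC -dC size_map_inj_poly //; exact: intr_inj.
rewrite size_map_inj_poly //; last exact: intr_inj.
have := Pdiv.Ring.ltn_rmodpN0 P d0; rewrite -/r.
by rewrite ltnNge => /negbTE ->.
Qed.
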